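(* Let $G$ be a bounded-length, turn-based Dec-POMDP (as described in the context). For any temperature $T>0$ and any starting joint policy $\pi_0$, the off-belief learning (OBL) operator computes a unique policy $\pi_1$; that is, there is exactly one policy $\pi_1$ such that for every action-observation history $\tau^i$ of an acting player $i$ and every action $a$, $$\pi_1(a\mid\tau^i)=\frac{\exp\!\big(Q^{\pi_0\to\pi_1}(a\mid\tau^i)/T\big)}{\sum_{a'}\exp\!\big(Q^{\pi_0\to\pi_1}(a'\mid\tau^i)/T\big)}.$$
   Context: A Dec-POMDP $G$ has states $s$, actions $a$, per-player observation functions $\Omega^i(s)$, a transition function $\mathcal{T}$, and a common reward $R(s,a)$. It is turn-based: at each state only one player acts (the others have a null action); it has bounded length: a terminal state is reached after at most $t_{max}$ steps. A trajectory $\tau_t$ is the history of states and actions up to time $t$; the action-observation history (AOH) of player $i$ is $\tau^i_t=(\Omega^i(s_1),a_1,\dots,a_{t-1},\Omega^i(s_t))$. A policy $\pi^i(a\mid\tau^i)$ maps an AOH to a distribution over actions; a joint policy $\pi$ collects these. For a trajectory $\tau$, $V^{\pi}(\tau)$ denotes the expected (undiscounted) future return when all players play $\pi$ from $\tau$ onward. For a joint policy $\pi_0$ played by all agents, the belief is $\mathcal{B}_{\pi_0}(\tau\mid\tau^i)=P(\tau\mid\tau^i,\pi_0)$. The counterfactual Q-value is $$Q^{\pi_0\to\pi_1}(a\mid\tau^i_t)=\sum_{\tau_t}\mathcal{B}_{\pi_0}(\tau_t\mid\tau^i_t)\Big[R(s_t,a)+\sum_{\tau_{t+1}}\mathcal{T}(\tau_{t+1}\mid\tau_t,a)\,V^{\pi_1}(\tau_{t+1})\Big],$$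 the expected return of playing $a$ at $\tau^i_t$ assuming $\pi_0$ was played to reach $\tau^i_t$ and $\pi_1$ is played by all players afterward. The OBL operator maps $\pi_0$ to the policy $\pi_1$ defined by the softmax of $Q^{\pi_0\to\pi_1}$ with temperature $T$, as in the claim. *)

(* Defs.v *)
From HB Require Import structures.
From mathcomp Require Import all_boot all_order all_algebra.
From mathcomp Require Import reals sequences exp.
Set Implicit Arguments. Unset Strict Implicit. Unset Printing Implicit Defensive.
Import Order.TTheory GRing.Theory Num.Theory.
Local Open Scope ring_scope.

(* Transitions are Markov on states; the acting player at a
   state s is [actor s]; the other players play the null action, so a joint
   action is identified with the action of the acting player. *)
Record decpomdp (R : realType) (I S A O : finType) := DecPOMDP {
  init : S -> R;
  trans : S -> A -> S -> R;     (* trans s a s' = P(s' | s, a) *)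
  rew : S -> A -> R;
  obs : I -> S -> O;
  actor : S -> I;
  terminal : pred S;
  tmax : nat
}.

Section DecPOMDP.
Variables (R : realType) (I S A O : finType) (G : decpomdp R I S A O).

(* trajectory tau_t = (s_1,a_1,...,a_{t-1},s_t) as (history of (s_k,a_k), s_t) *)
Definition traj := (seq (S * A) * S)%type.
(* action-observation history (Omega^i(s_1),a_1,...,a_{t-1},Omega^i(s_t)) *)
Definition aohT := (seq (O * A) * O)%type.
(* joint policy: pi i tau^i a = pi^i(a | tau^i) *)
Definition policy := I -> aohT -> A -> R.

Definition aoh (i : I) (tau : traj) : aohT :=
  ([seq (obs G i p.1, p.2) | p <- tau.1], obs G i tau.2).

Definition is_dist (T : finType) (f : T -> R) :=
  (forall x, 0 <= f x) /\ \sum_(x : T) f x = 1.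

Definition is_policy (pi : policy) := forall i tau, is_dist (pi i tau).

Definition well_formed :=
  is_dist (init G) /\ forall s a, is_dist (trans G s a).

Definition first_state (tau : traj) : S :=
  match tau.1 with [::] => tau.2 | p :: _ => p.1 end.

(* Bounded length: along every trajectory that is possible under the dynamics
   (positive initial and transition probabilities), a terminal state is
   reached after at most tmax steps, i.e. a trajectory all of whose states are
   non-terminal has at most tmax states. *)
Fixpoint steps_ok (h : seq (S * A)) (s : S) : bool :=
  match h with
  | [::] => true
  | (s0, a0) :: h' =>
      [&& 0 < trans G s0 a0 (first_state (h', s)) & steps_ok h' s]
  end.
Definition feasible (tau : traj) :=
  (0 < init G (first_state tau)) && steps_ok tau.1 tau.2.
Definition bounded_length :=
  forall tau : traj, feasible tau ->
    all (fun p => ~~ terminal G p.1) tau.1 -> ~~ terminal G tau.2 ->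
    (size tau.1 < tmax G)%N.

(* P(tau | pi): probability of a trajectory when all players play pi.
   No action is taken from a terminal state. *)
Fixpoint prob_steps (pi : policy) (pre : seq (S * A)) (h : seq (S * A)) (s : S)
  : R :=
  match h with
  | [::] => 1
  | (s0, a0) :: h' =>
      (~~ terminal G s0)%:R * pi (actor G s0) (aoh (actor G s0) (pre, s0)) a0
      * trans G s0 a0 (first_state (h', s))
      * prob_steps pi (rcons pre (s0, a0)) h' s
  end.
Definition traj_prob (pi : policy) (tau : traj) : R :=
  init G (first_state tau) * prob_steps pi [::] tau.1 tau.2.

(* V^pi(tau): expected undiscounted future return when all players play pi
   from tau on; computed with [n] steps of lookahead (n = tmax suffices by
   bounded length). *)
Fixpoint value (n : nat) (pi : policy) (tau : traj) : R :=
  match n with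
  | 0 => 0
  | n'.+1 =>
      if terminal G tau.2 then 0 else
      \sum_(a : A) pi (actor G tau.2) (aoh (actor G tau.2) tau) a *
        (rew G tau.2 a +
         \sum_(s' : S) trans G tau.2 a s' * value n' pi (rcons tau.1 (tau.2, a), s'))
  end.
Definition V (pi : policy) (tau : traj) : R := value (tmax G) pi tau.

Definition consistent_weight (pi0 : policy) (i : I) (taui : aohT) (tau : traj) : R :=
  (aoh i tau == taui)%:R * traj_prob pi0 tau.

(* Belief B_{pi0}(tau | tau^i) = P(tau | tau^i, pi0), for trajectories tau of
   the same length as tau^i (all others have belief 0).  By the MathComp
   convention x / 0 = 0, the belief is identically 0 if tau^i has probability 0. *)
Definition belief (pi0 : policy) (i : I) (taui : aohT) (tau : traj) : R :=
  consistent_weight pi0 i taui tau /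
  \sum_(h : (size taui.1).-tuple (S * A)) \sum_(s : S)
     consistent_weight pi0 i taui (tval h, s).

Definition cfQ (pi0 pi1 : policy) (i : I) (taui : aohT) (a : A) : R :=
  \sum_(h : (size taui.1).-tuple (S * A)) \sum_(s : S)
    belief pi0 i taui (tval h, s) *
    (rew G s a + \sum_(s' : S) trans G s a s' * V pi1 (rcons (tval h) (s, a), s')).

Definition acting_aoh (i : I) (taui : aohT) :=
  exists tau : traj, aoh i tau = taui /\ actor G tau.2 = i /\ ~~ terminal G tau.2.

Definition obl_fixed (temp : R) (pi0 pi1 : policy) :=
  forall i taui, acting_aoh i taui -> forall a,
    pi1 i taui a =
      expR (cfQ pi0 pi1 i taui a / temp) /
      \sum_(a' : A) expR (cfQ pi0 pi1 i taui a' / temp).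

End DecPOMDP.

(* Main.v *)
Require Import Defs.
From HB Require Import structures.
From mathcomp Require Import all_boot all_order all_algebra.
From mathcomp Require Import reals sequences exp.
From mathcomp Require Import zify.
Import Order.TTheory GRing.Theory Num.Theory.
Local Open Scope ring_scope.

Lemma first_state_rcons (S A : finType) (h : seq (S * A)) (p : S * A) (s : S) :
  @first_state S A (rcons h p, s) = first_state (h, p.1).
Proof. by case: h. Qed.

Lemma prob_steps_rcons (R : realType) (I S A O : finType) (G : decpomdp R I S A O)
  pi h1 s1 a1 s : forall pre,
  prob_steps G pi pre (rcons h1 (s1, a1)) s =
  prob_steps G pi pre h1 s1 * ((~~ terminal G s1)%:R *
     pi (actor G s1) (aoh G (actor G s1) (pre ++ h1, s1)) a1 * trans G s1 a1 s).
Proof.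
elim: h1 => [|[s0 a0] h IH] pre /=.
  by rewrite cats0 mulr1 mul1r.
by rewrite IH first_state_rcons /= cat_rcons !mulrA.
Qed.

Lemma prob_steps_nz (R : realType) (I S A O : finType) (G : decpomdp R I S A O)
  pi (h : seq (S * A)) s :
  (forall s a s', 0 <= trans G s a s') -> forall pre,
  prob_steps G pi pre h s != 0 ->
  steps_ok G h s && all (fun p => ~~ terminal G p.1) h.
Proof.
move=> tr0; elim: h => [|[s0 a0] h IH] pre //=.
rewrite !mulf_eq0 !negb_or => /andP[/andP[/andP[t0 _] tn] pn].
have -> : 0 < trans G s0 a0 (first_state (h, s)) by rewrite lt_def tn tr0.
move: t0; case: (terminal G s0); rewrite /= ?eqxx // => _.
exact: IH pn.
Qed.

Lemma traj_prob0 (R : realType) (I S A O : finType) (G : decpomdp R I S A O)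
  pi (h : seq (S * A)) s :
  well_formed G -> bounded_length G -> (tmax G < size h)%N ->
  traj_prob G pi (h, s) = 0.
Proof.
move=> [[i0 _] trd] bl; case/lastP: h => [|h1 [s1 a1]] //.
rewrite size_rcons => hs.
case: (eqVneq (traj_prob G pi (rcons h1 (s1, a1), s)) 0) => // Hne; exfalso.
move: Hne; rewrite /traj_prob prob_steps_rcons first_state_rcons /=.
rewrite !mulf_eq0 !negb_or => /andP[ini /andP[ps /andP[/andP[t0 _] _]]].
have tr0 : forall s a s', 0 <= trans G s a s' by move=> s0 a0 s0'; exact: (trd s0 a0).1.
have /andP[sok al] := @prob_steps_nz R I S A O G pi h1 s1 tr0 _ ps.
have feas : feasible G (h1, s1).
  by rewrite /feasible /= sok andbT lt_def ini i0.
have nt : ~~ terminal G s1 by move: t0; case: (terminal G s1); rewrite /= ?eqxx.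
have := bl _ feas al nt; rewrite /=; lia.
Qed.

Lemma cfQ0 (R : realType) (I S A O : finType) (G : decpomdp R I S A O)
  pi0 p i (x : aohT A O) a :
  well_formed G -> bounded_length G -> (tmax G < size x.1)%N ->
  cfQ G pi0 p i x a = 0.
Proof.
move=> wf bl hs; rewrite /cfQ; apply: big1 => h _; apply: big1 => s _.
rewrite /belief /consistent_weight traj_prob0 ?mulr0 ?mul0r //.
by rewrite size_tuple.
Qed.

Lemma value_ext (R : realType) (I S A O : finType) (G : decpomdp R I S A O)
  m (p q : policy R I A O) :
  (forall j y a, acting_aoh G j y -> (m <= size y.1)%N -> p j y a = q j y a) ->
  forall n (tau : traj S A), (m <= size tau.1)%N -> value G n p tau = value G n q tau.
Proof.
move=> H; elim=> [|n IH] tau hs //=.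
case nt: (terminal G tau.2) => //.
apply: eq_bigr => a _.
rewrite H; last by rewrite /aoh /= size_map.
  congr (_ * (_ + _)); apply: eq_bigr => s' _; rewrite IH //.
  by rewrite /= size_rcons; lia.
by exists tau; rewrite nt.
Qed.

Lemma cfQ_ext (R : realType) (I S A O : finType) (G : decpomdp R I S A O)
  pi0 (p q : policy R I A O) i (x : aohT A O) a :
  (forall j y b, acting_aoh G j y -> (size x.1 < size y.1)%N -> p j y b = q j y b) ->
  cfQ G pi0 p i x a = cfQ G pi0 q i x a.
Proof.
move=> H; rewrite /cfQ; apply: eq_bigr => h _; apply: eq_bigr => s _.
congr (_ * (_ + _)); apply: eq_bigr => s' _.
rewrite /V (@value_ext R I S A O G (size x.1).+1 p q) //.
by rewrite /= size_rcons size_tuple.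
Qed.

Definition Fop (R : realType) (I S A O : finType) (G : decpomdp R I S A O)
  (temp : R) pi0 (p : policy R I A O) : policy R I A O :=
  fun i x a => expR (cfQ G pi0 p i x a / temp) /
               \sum_(a' : A) expR (cfQ G pi0 p i x a' / temp).

Lemma Fop_ext (R : realType) (I S A O : finType) (G : decpomdp R I S A O)
  temp pi0 (p q : policy R I A O) j y a :
  (forall b, cfQ G pi0 p j y b = cfQ G pi0 q j y b) ->
  @Fop R I S A O G temp pi0 p j y a = @Fop R I S A O G temp pi0 q j y a.
Proof.
move=> E; rewrite /Fop E; congr (_ / _); apply: eq_bigr => b _; by rewrite E.
Qed.

Lemma Fop_dist (R : realType) (I S A O : finType) (G : decpomdp R I S A O)
  temp pi0 (p : policy R I A O) j y :
  (0 < #|A|)%N -> is_dist (@Fop R I S A O G temp pi0 p j y).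
Proof.
move=> cA; have [a0 _] := card_gt0P cA.
have Spos : 0 < \sum_(b : A) expR (cfQ G pi0 p j y b / temp).
  rewrite (bigD1 a0) //=; apply: (@lt_le_trans _ _ (expR (cfQ G pi0 p j y a0 / temp))); first exact: expR_gt0.
  by rewrite lerDl; apply: sumr_ge0 => b _; exact: expR_ge0.
split.
  move=> a; rewrite /Fop divr_ge0 ?expR_ge0 //; exact: ltW.
rewrite /Fop -mulr_suml divff //; exact: lt0r_neq0.
Qed.

Theorem theorem1 (R : realType) (I S A O : finType) (G : decpomdp R I S A O) :
  well_formed G -> bounded_length G -> (0 < #|A|)%N ->
  forall (temp : R), 0 < temp ->
  forall pi0 : policy R I A O, is_policy pi0 ->
  exists pi1 : policy R I A O,
    [/\ is_policy pi1, obl_fixed G temp pi0 pi1 &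
        forall pi2 : policy R I A O, is_policy pi2 -> obl_fixed G temp pi0 pi2 ->
          forall i taui, acting_aoh G i taui -> forall a, pi2 i taui a = pi1 i taui a].
Proof.
move=> wf bl cA temp tp pi0 _.
pose F := @Fop R I S A O G temp pi0.
pose P k := iter k.+1 F (fun _ _ _ => 0).
have stab : forall k j y a, (tmax G < size y.1 + k)%N -> P k.+1 j y a = P k j y a.
  elim=> [|k IH] j y a hs.
    change (F (P 0%N) j y a = F (fun _ _ _ => 0) j y a).
    have E : forall p b, cfQ G pi0 p j y b = 0.
      by move=> p b; apply: cfQ0 => //; rewrite addn0 in hs.
    by apply: Fop_ext => b; rewrite !E.
  have E : forall b, cfQ G pi0 (P k.+1) j y b = cfQ G pi0 (P k) j y b.
    move=> b; apply: cfQ_ext => j' y' b' _ hs'; apply: IH.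
    by move: hs hs'; clear; lia.
  change (F (P k.+1) j y a = F (P k) j y a).
  by apply: Fop_ext.
pose pi1 := P (tmax G).+1.
have fix1 : forall i x a, pi1 i x a = F pi1 i x a.
  move=> i x a; transitivity (P (tmax G).+2 i x a).
    by rewrite stab //; clear; lia.
  by [].
exists pi1; split.
- move=> i x; exact: Fop_dist.
- move=> i x _ a; exact: fix1 i x a.
move=> pi2 _ fix2.
have U : forall k j y a, acting_aoh G j y -> (tmax G < size y.1 + k)%N ->
    pi2 j y a = pi1 j y a.
  elim=> [|k IH] j y a ac hs.
    have fix2' : pi2 j y a = F pi2 j y a := fix2 j y ac a.
    rewrite fix2' fix1; apply: Fop_ext => b.
    by rewrite !cfQ0 // -(addn0 (size y.1)).
  have fix2' : pi2 j y a = F pi2 j y a := fix2 j y ac a.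
  rewrite fix2' fix1; apply: Fop_ext => b.
  apply: cfQ_ext => j' y' b' ac' hs'; apply: IH => //.
  by move: hs hs'; clear; lia.
move=> i x ac a; apply: (U (tmax G).+1) => //.
by clear; lia.
Qed.
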